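(* Let $X$ be a fibrewise pointed space over $B$. If $X$ is fibrewise locally equiconnected and $X\times_BX$ is a normal space, then $$\mathrm{TC}_B(X)\le\mathrm{TC}^B_B(X)\le\mathrm{TC}_B(X)+1.$$
   Context: A fibrewise space over $B$ is a space $X$ with $p_X:X\to B$; fibrewise maps satisfy $p_Y\circ f=p_X$; fibrewise homotopies $H$ satisfy $p_Y(H(x,t))=p_X(x)$ ($\simeq_B$). A fibrewise pointed space has $s_X:B\to X$ with $p_X\circ s_X=1_B$; fibrewise pointed homotopies additionally satisfy $H(s_X(b),t)=s_Y(b)$ ($\simeq^B_B$). A fibrewise map $j:A\to X$ is a fibrewise cofibration if it has the homotopy extension property for fibrewise homotopies: for every fibrewise map $f:X\to Y$ and fibrewise homotopy $H:A\times I\to Y$ with $H(-,0)=f\circ j$ there is a fibrewise homotopy $\tilde H:X\times I\to Y$ with $\tilde H(-,0)=f$ and $\tilde H\circ(j\times 1_I)=H$; it is closed if it is a closed embedding. $X$ is fibrewise locally equiconnected if the diagonal $\Delta_X:X\to X\times_BX=\{(x,y):p_X(x)=p_X(y)\}$ is a closed fibrewise cofibration. $\mathrm{secat}_B(f)$ (resp. $\mathrm{secat}^B_B(f)$) for a fibrewise (resp. fibrewise pointed) map $f:E\to X$ is the least $k$ such that $X$ is covered by $k+1$ open sets $U$ (resp. open sets $U\supseteq s_X(B)$) admitting a fibrewise (resp. fibrewise pointed) map $s:U\to E$ with $f\circ s\simeq_B$ (resp. $\simeq^B_B$) the inclusion. $P_B(X)=\{(b,\alpha)\in B\times X^I:p_X\circ\alpha\equiv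 b\}$ with projection $(b,\alpha)\mapsto b$ and section $b\mapsto(b,c_{s_X(b)})$; $X\times_BX$ has section $b\mapsto(s_X(b),s_X(b))$; $\Pi_X(b,\alpha)=(\alpha(0),\alpha(1))$. $\mathrm{TC}_B(X)=\mathrm{secat}_B(\Pi_X)$ and $\mathrm{TC}^B_B(X)=\mathrm{secat}^B_B(\Pi_X)$. *)

(* Defs.v *)
From HB Require Import structures.
From mathcomp Require Import all_boot all_order all_algebra.
From mathcomp Require Import all_classical reals ereal topology normedtype.

Set Implicit Arguments.
Unset Strict Implicit.
Unset Printing Implicit Defensive.
Import Order.TTheory GRing.Theory Num.Theory.
Import numFieldNormedType.Exports.

Local Open Scope classical_set_scope.
Local Open Scope ring_scope.

Section Fibrewise.
Context {R : realType} {B : topologicalType}.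

Definition II : topologicalType := set_type [set x : R | 0 <= x <= 1].

Definition fibrewise {E Y : Type} (pE : E -> B) (pY : Y -> B) (f : E -> Y) :=
  forall x, pY (f x) = pE x.

Definition fhtpy {E Y : topologicalType} (pE : E -> B) (pY : Y -> B)
    (f g : E -> Y) : Prop :=
  exists H : E * II -> Y, [/\ continuous H,
    (forall x (t : II), set_val t = 0 -> H (x, t) = f x),
    (forall x (t : II), set_val t = 1 -> H (x, t) = g x) &
    (forall x t, pY (H (x, t)) = pE x)].

(** Fibrewise pointed homotopy f ~^B_B g : E -> Y, where [bE] is the set of
    base points s_E(B) of E and [sY] the section of Y:
    additionally H (s_E b, t) = s_Y b (here b = p_E (s_E b)). *)
Definition fphtpy {E Y : topologicalType} (pE : E -> B) (bE : set E)
    (pY : Y -> B) (sY : B -> Y) (f g : E -> Y) : Prop :=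
  exists H : E * II -> Y, [/\ continuous H,
    (forall x (t : II), set_val t = 0 -> H (x, t) = f x),
    (forall x (t : II), set_val t = 1 -> H (x, t) = g x),
    (forall x t, pY (H (x, t)) = pE x) &
    (forall x t, bE x -> H (x, t) = sY (pE x))].

Definition closed_embedding {A X : topologicalType} (j : A -> X) : Prop :=
  [/\ continuous j, injective j, closed (range j) &
    forall U : set A, open U -> exists V : set X, open V /\ j @` U = V `&` range j].

Definition fcofibration {A X : topologicalType} (pA : A -> B) (pX : X -> B)
    (j : A -> X) : Prop :=
  continuous j /\ fibrewise pA pX j /\
  forall (Y : topologicalType) (pY : Y -> B) (f : X -> Y) (H : A * II -> Y),
    continuous f -> fibrewise pX pY f ->
    continuous H -> (forall a t, pY (H (a, t)) = pA a) ->
    (forall a (t : II), set_val t = 0 -> H (a, t) = f (j a)) ->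
    exists H' : X * II -> Y, [/\ continuous H',
      (forall x t, pY (H' (x, t)) = pX x),
      (forall x (t : II), set_val t = 0 -> H' (x, t) = f x) &
      (forall a t, H' (j a, t) = H (a, t))].

Definition FP {X : topologicalType} (pX : X -> B) : topologicalType :=
  set_type [set xy : X * X | pX xy.1 = pX xy.2].

Definition pFP {X : topologicalType} (pX : X -> B) (z : FP pX) : B :=
  pX (set_val z).1.

Definition diagFP {X : topologicalType} (pX : X -> B) (x : X) : FP pX :=
  @SigSub _ _ [set xy : X * X | pX xy.1 = pX xy.2] (x, x) (mem_set erefl).

Definition sFP {X : topologicalType} (pX : X -> B) (sX : B -> X) (b : B)
  : FP pX := diagFP pX (sX b).

Definition fLEC {X : topologicalType} (pX : X -> B) : Prop :=
  closed_embedding (diagFP pX) /\ fcofibration pX (@pFP X pX) (diagFP pX).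

Definition PB_set {X : topologicalType} (pX : X -> B) :
    set (B * {compact-open, II -> X}) :=
  [set ba | continuous (ba.2 : II -> X) /\ forall t, pX (ba.2 t) = ba.1].

Definition PB {X : topologicalType} (pX : X -> B) : topologicalType := set_type (PB_set pX).

Definition pPB {X : topologicalType} (pX : X -> B) (z : PB pX) : B :=
  (set_val z).1.

Lemma PB_sec_mem {X : topologicalType} (pX : X -> B) (sX : B -> X)
  (hs : forall b, pX (sX b) = b) (b : B) :
  (b, (fun _ : II => sX b) : {compact-open, II -> X}) \in PB_set pX.
Proof. by apply/mem_set; split => //=; exact: cst_continuous. Qed.

Definition sPB {X : topologicalType} (pX : X -> B) (sX : B -> X)
  (hs : forall b, pX (sX b) = b) (b : B) : PB pX :=
  SigSub (PB_sec_mem hs b).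

Lemma zeroII_mem : (0 : R) \in [set x : R | 0 <= x <= 1].
Proof. by apply/mem_set => /=; rewrite lexx ler01. Qed.
Lemma oneII_mem : (1 : R) \in [set x : R | 0 <= x <= 1].
Proof. by apply/mem_set => /=; rewrite lexx ler01. Qed.
Definition zeroII : II := SigSub zeroII_mem.
Definition oneII : II := SigSub oneII_mem.

Lemma PiX_mem {X : topologicalType} (pX : X -> B) (z : PB pX) :
  ((set_val z).2 zeroII, (set_val z).2 oneII)
    \in [set xy : X * X | pX xy.1 = pX xy.2].
Proof.
apply/mem_set => /=; have := set_valP z; rewrite /PB_set /= => -[_ h].
by rewrite !h.
Qed.

Definition PiX {X : topologicalType} (pX : X -> B) (z : PB pX) : FP pX :=
  SigSub (PiX_mem z).

Definition secatB_le {E X : topologicalType} (pE : E -> B) (pX : X -> B)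
    (f : E -> X) (k : nat) : Prop :=
  exists U : 'I_k.+1 -> set X,
    [/\ (forall i, open (U i)), \bigcup_i U i = [set: X] &
      forall i, exists s : set_type (U i) -> E,
        [/\ continuous s, fibrewise (pX \o set_val) pE s &
            fhtpy (pX \o set_val) pX (f \o s) set_val]].

Definition secatBB_le {E X : topologicalType} (pE : E -> B) (sE : B -> E)
    (pX : X -> B) (sX : B -> X) (f : E -> X) (k : nat) : Prop :=
  exists U : 'I_k.+1 -> set X,
    [/\ (forall i, open (U i)), \bigcup_i U i = [set: X] &
      forall i, range sX `<=` U i /\ exists s : set_type (U i) -> E,
        [/\ continuous s, fibrewise (pX \o set_val) pE s,
            (forall u, range sX (set_val u) -> s u = sE (pX (set_val u))) &
            fphtpy (pX \o set_val) (fun u => range sX (set_val u)) pX sX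
              (f \o s) set_val]].

Definition secatB {E X : topologicalType} (pE : E -> B) (pX : X -> B)
    (f : E -> X) : \bar R :=
  ereal_inf [set (k%:R)%:E | k in [set k | secatB_le pE pX f k]].

Definition secatBB {E X : topologicalType} (pE : E -> B) (sE : B -> E)
    (pX : X -> B) (sX : B -> X) (f : E -> X) : \bar R :=
  ereal_inf [set (k%:R)%:E | k in [set k | secatBB_le pE sE pX sX f k]].

Definition TCB {X : topologicalType} (pX : X -> B) : \bar R :=
  secatB (@pPB X pX) (@pFP X pX) (@PiX X pX).

Definition TCBB {X : topologicalType} (pX : X -> B) (sX : B -> X)
  (hs : forall b, pX (sX b) = b) : \bar R :=
  secatBB (@pPB X pX) (sPB hs) (@pFP X pX) (sFP pX sX) (@PiX X pX).

End Fibrewise.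

(* Main.v *)
Require Import Defs.
From HB Require Import structures.
From mathcomp Require Import all_boot all_order all_algebra.
From mathcomp Require Import all_classical reals ereal topology normedtype.
From mathcomp Require Import lra.
Set Implicit Arguments.
Unset Strict Implicit.
Unset Printing Implicit Defensive.
Import Order.TTheory GRing.Theory Num.Theory.
Import numFieldNormedType.Exports.
Local Open Scope classical_set_scope.
Local Open Scope ring_scope.





Lemma val_cont {T : topologicalType} (A : set T) : continuous (set_val : set_type A -> T).
Proof. exact: initial_continuous. Qed.

Lemma cont_sub {Z T : topologicalType} (A : set T) (f : Z -> set_type A) :
  continuous (set_val \o f) -> continuous f.
Proof. exact: continuous_comp_initial. Qed.

Lemma fst_cont {T S : topologicalType} : continuous (@fst T S).
Proof. by move=> p; exact: cvg_fst. Qed.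
Lemma snd_cont {T S : topologicalType} : continuous (@snd T S).
Proof. by move=> p; exact: cvg_snd. Qed.

Lemma pair_cont {Z T S : topologicalType} (f : Z -> T) (g : Z -> S) :
  continuous f -> continuous g -> continuous (fun z => (f z, g z)).
Proof. by move=> cf cg z; apply: cvg_pair; [exact: cf|exact: cg]. Qed.

Lemma SigSub_irr {T : Type} (A : set T) x (p q : x \in A) : SigSub p = SigSub q.
Proof. by congr SigSub; exact: Prop_irrelevance. Qed.

Lemma local_cont {T S Y : topologicalType} (W A : set T)
  (h : set_type A * S -> Y) (F : set_type W * S -> Y) :
  open A -> continuous h ->
  (forall (u : set_type W) s (p : A (set_val u)), F (u, s) = h (SigSub (mem_set p), s)) ->
  forall u s, A (set_val u) -> {for (u, s), continuous F}.
Proof.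
move=> oA ch HF u s Au.
pose E := [set p : set_type W * S | A (set_val p.1)].
have oE : open E.
  have := @continuousP _ _ (set_val \o (@fst (set_type W) S)).
  case=> + _; apply; last exact: oA.
  move=> p; apply: continuous_comp; [exact: fst_cont|exact: val_cont].
pose k1 (e : set_type E) : set_type A := @SigSub _ _ _ (set_val (set_val e).1) (mem_set (set_valP e : A (set_val (set_val e).1))).
have ck1 : continuous k1.
  apply: cont_sub => /=.
  have -> : set_val \o k1 = set_val \o (@fst (set_type W) S) \o set_val by [].
  move=> e; apply: continuous_comp; first exact: val_cont.
  apply: continuous_comp; [exact: fst_cont|exact: val_cont].
have cs : continuous (sigL E F).
  have -> : sigL E F = h \o (fun e => (k1 e, (set_val e).2)).
    apply: funext => -[[w t] pe] /=.
    rewrite /sigL /= (HF w t (set_mem pe)) /k1 /=; congr (h (_, _)); exact: SigSub_irr.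
  move=> e; apply: continuous_comp; last exact: ch.
  apply: pair_cont => // e'; apply: continuous_comp; [exact: val_cont|exact: snd_cont].
have := (subspace_sigL_continuousP E F).2 cs.
rewrite continuous_open_subspace // => /(_ (u, s)); apply.
by rewrite inE.
Qed.

Section Glue.
Context {T S Y : topologicalType} (W P Q : set T)
  (cov : forall x, W x -> ~ P x -> Q x) (disj : forall x, P x -> Q x -> False)
  (hP : set_type P * S -> Y) (hQ : set_type Q * S -> Y).

Definition glue (ws : set_type W * S) : Y :=
  match pselect (P (set_val ws.1)) with
  | left p => hP (SigSub (mem_set p), ws.2)
  | right np => hQ (SigSub (mem_set (cov (set_valP ws.1) np)), ws.2)
  end.

Lemma glueP (u : set_type W) s (p : P (set_val u)) :
  glue (u, s) = hP (SigSub (mem_set p), s).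
Proof.
rewrite /glue /=; case: pselect => [p'|//]; congr (hP (_, _)); exact: SigSub_irr.
Qed.

Lemma glueQ (u : set_type W) s (q : Q (set_val u)) :
  glue (u, s) = hQ (SigSub (mem_set q), s).
Proof.
rewrite /glue /=; case: pselect => [p'|np]; first by case: (disj p' q).
congr (hQ (_, _)); exact: SigSub_irr.
Qed.

Lemma glue_cont : open P -> open Q -> continuous hP -> continuous hQ ->
  continuous glue.
Proof.
move=> oP oQ cP cQ [u s].
case: (pselect (P (set_val u))) => [p|np].
  exact: (local_cont oP cP glueP).
exact: (local_cont oQ cQ glueQ (cov (set_valP u) np)).
Qed.
End Glue.

Lemma sv_inj {T : Type} (A : set T) (x y : set_type A) : set_val x = set_val y -> x = y.
Proof. move: x y => [x px] [y py] xy; have e : x = y by exact: xy. subst y; congr exist; exact: Prop_irrelevance. Qed.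

Section Clamp.
Context {R : realType}.
Notation I := (@II R).

Lemma clamp_mem (r : R) : 0 <= r -> Num.min r 1 \in [set x : R | 0 <= x <= 1].
Proof.
move=> r0; apply/mem_set => /=; rewrite ge_min lexx orbT andbT.
by rewrite le_min r0 ler01.
Qed.

Definition clamp (r : R) (h : 0 <= r) : I := SigSub (clamp_mem h).

Lemma II_ge0 (t : I) : 0 <= set_val t.
Proof. by case/andP: (set_valP t). Qed.
Lemma II_le1 (t : I) : set_val t <= 1.
Proof. by case/andP: (set_valP t). Qed.

Lemma phi1_ge0 (t : I) : 0 <= 2 * set_val t.
Proof. by rewrite mulr_ge0 // II_ge0. Qed.
Lemma phi2_ge0 (t : I) : 0 <= 2 - 2 * set_val t.
Proof. by rewrite subr_ge0 -{2}(mulr1 2) ler_pM2l // II_le1. Qed.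

Definition phi1 (t : I) : I := clamp (phi1_ge0 t).
Definition phi2 (t : I) : I := clamp (phi2_ge0 t).

Lemma phi1_cont : continuous phi1.
Proof.
apply: cont_sub => t /=.
apply: (@continuous_min R I (fun t => 2 * set_val t) (fun=> 1)); last exact: cst_continuous.
apply: (@continuousM R I (fun=> 2) set_val).
  exact: cst_continuous.
exact: val_cont.
Qed.

Lemma phi2_cont : continuous phi2.
Proof.
apply: cont_sub => t /=.
apply: (@continuous_min R I (fun t => 2 - 2 * set_val t) (fun=> 1)); last exact: cst_continuous.
apply: (@continuousB R R^o I (fun=> 2) (fun t => 2 * set_val t)).
  exact: cst_continuous.
apply: (@continuousM R I (fun=> 2) set_val); first exact: cst_continuous.
exact: val_cont.
Qed.
End Clamp.

Section Main.
Context {R : realType} {B X : topologicalType} (pX : X -> B) (sX : B -> X)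
  (pX_cont : continuous pX) (hs : forall b, pX (sX b) = b).
Notation I := (@II R).
Notation FPX := (FP pX).
Notation pF := (@pFP B X pX).

Definition Mset : set (FPX * I) :=
  [set w | set_val w.2 = 0 \/ (set_val w.1).1 = (set_val w.1).2].
Definition Y := set_type Mset.
Definition pY (w : Y) : B := pF (set_val w).1.
Definition f0 (z : FPX) : Y := @SigSub _ _ _ (z, zeroII) (mem_set (or_introl erefl)).
Definition H0 (p : X * I) : Y :=
  @SigSub _ _ _ (diagFP pX p.1, p.2) (mem_set (or_intror erefl)).

Lemma pF_cont : continuous pF.
Proof.
move=> z; apply: (@continuous_comp _ _ _ (fun z : FPX => (set_val z).1)); last exact: pX_cont.
apply: continuous_comp; [exact: val_cont|exact: fst_cont].
Qed.

Lemma f0_cont : continuous f0.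
Proof. apply: cont_sub; apply: (@pair_cont _ _ _ (fun z => z) (fun=> zeroII)); [by move=> ?|exact: cst_continuous]. Qed.

Lemma H0_cont : continuous (diagFP pX) -> continuous H0.
Proof.
move=> cd; apply: cont_sub; apply: pair_cont.
  move=> p; apply: continuous_comp; [exact: fst_cont|exact: cd].
exact: snd_cont.
Qed.

Section Deform.
Context (Hd : FPX * I -> Y) (Hc : continuous Hd)
  (Hf : forall z t, pY (Hd (z, t)) = pF z)
  (He : forall z (t : I), set_val t = 0 -> Hd (z, t) = f0 z)
  (Hr : forall a t, Hd (diagFP pX a, t) = H0 (a, t)).

Definition D (p : FPX * I) : FPX := (set_val (Hd p)).1.
Definition g (z : FPX) : R := set_val (set_val (Hd (z, oneII))).2.

Lemma D_cont : continuous D.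
Proof.
move=> p; apply: (@continuous_comp _ _ _ Hd (fun y : Y => (set_val y).1)); first exact: Hc.
apply: continuous_comp; [exact: val_cont|exact: fst_cont].
Qed.

Lemma g_cont : continuous g.
Proof.
move=> z; apply: (@continuous_comp FPX (FPX * I)%type R (fun z => (z, oneII)) (fun p => set_val (set_val (Hd p)).2) z).
  by apply: (@pair_cont _ _ _ (fun z => z) (fun=> oneII)); [move=> ?|exact: cst_continuous].
apply: (@continuous_comp _ _ _ Hd (fun y : Y => set_val (set_val y).2)); first exact: Hc.
apply: (@continuous_comp _ _ _ set_val (fun y : FPX * I => set_val y.2)); first exact: val_cont.
apply: continuous_comp; [exact: snd_cont|exact: val_cont].
Qed.

Lemma D0 z (t : I) : set_val t = 0 -> D (z, t) = z.
Proof. by move=> t0; rewrite /D He. Qed.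

Lemma Dfib z t : pF (D (z, t)) = pF z.
Proof. exact: Hf. Qed.

Lemma Ddiag a t : D (diagFP pX a, t) = diagFP pX a.
Proof. by rewrite /D Hr. Qed.

Lemma gdiag a : g (diagFP pX a) = 1.
Proof. by rewrite /g Hr. Qed.

Lemma II_eq (t u : I) : set_val t = set_val u -> t = u.
Proof. exact: sv_inj. Qed.

Lemma Dend z (t : I) : 0 < g z -> set_val t = 1 ->
  (set_val (D (z, t))).1 = (set_val (D (z, t))).2.
Proof.
move=> gz t1; have -> : t = oneII by apply: II_eq.
rewrite /D; case: (set_valP (Hd (z, oneII))) => // h.
by move: gz; rewrite /g h ltxx.
Qed.

Definition N := [set z | 0 < g z].
Definition V := [set z : FPX | 2^-1 < g z].
Definition C := [set z : FPX | 2^-1 <= g z].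

Definition gam (z : FPX) (t : I) : X :=
  if set_val t <= 2^-1 then (set_val (D (z, phi1 t))).1
  else (set_val (D (z, phi2 t))).2.

Lemma gam_fib z t : pX (gam z t) = pF z.
Proof.
rewrite /gam; case: ifP => _; first exact: Dfib.
have := set_valP (D (z, phi2 t)); rewrite /= => <-; exact: Dfib.
Qed.


Lemma half2 : (2 : R) * 2^-1 = 1.
Proof. by rewrite mulfV // pnatr_eq0. Qed.

Lemma phi1E (t : I) : set_val (phi1 t) = Num.min (2 * set_val t) 1.
Proof. by []. Qed.
Lemma phi2E (t : I) : set_val (phi2 t) = Num.min (2 - 2 * set_val t) 1.
Proof. by []. Qed.

Lemma phi1_half (t : I) : set_val t = 2^-1 -> set_val (phi1 t) = 1.
Proof. by move=> ht; rewrite phi1E ht half2 minxx. Qed.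
Lemma phi2_half (t : I) : set_val t = 2^-1 -> set_val (phi2 t) = 1.
Proof. by move=> ht; rewrite phi2E ht half2 (_ : 2 - 1 = 1 :> R) ?minxx //; lra. Qed.
Lemma phi1_0 (t : I) : set_val t = 0 -> set_val (phi1 t) = 0.
Proof. by move=> ht; rewrite phi1E ht mulr0 /Num.min ltr01. Qed.
Lemma phi2_1 (t : I) : set_val t = 1 -> set_val (phi2 t) = 0.
Proof. by move=> ht; rewrite phi2E ht mulr1 subrr /Num.min ltr01. Qed.


Lemma closed_pre {T : topologicalType} (h : T -> R) (c : R) (b : bool) :
  continuous h -> closed [set p | if b then h p <= c else c <= h p].
Proof.
move=> ch; case: b.
  exact: ((continuous_closedP h).1 ch _ (@closed_le R c)).
exact: ((continuous_closedP h).1 ch _ (@closed_ge R c)).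
Qed.

Section Path.
Context (A : set FPX) (AN : forall z, A z -> N z).

Definition qA (p : set_type A * I) : X := gam (set_val p.1) p.2.

Lemma qA_cont : continuous qA.
Proof.
pose A1 := [set p : set_type A * I | set_val p.2 <= 2^-1].
pose A2 := [set p : set_type A * I | 2^-1 <= set_val p.2].
have cv2 : continuous (fun p : set_type A * I => set_val p.2).
  by move=> p; apply: continuous_comp; [exact: snd_cont|exact: val_cont].
have cA1 : closed A1 by have := closed_pre (c:=2^-1) (b:=true) cv2.
have cA2 : closed A2 by have := closed_pre (c:=2^-1) (b:=false) cv2.
apply/continuous_subspace_setT.
have -> : [set: set_type A * I] = A1 `|` A2.
  apply/seteqP; split => p // _; rewrite /A1 /A2 /=.
  by case: (lerP (set_val p.2) 2^-1) => h; [left|right; exact: ltW].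
apply: withinU_continuous => //.
- pose F1 (p : set_type A * I) := (set_val (D (set_val p.1, phi1 p.2))).1.
  have cF1 : continuous F1.
    move=> p; apply: (@continuous_comp _ _ _ (fun p : set_type A * I => (set_val p.1, phi1 p.2))
      (fun q => (set_val (D q)).1)).
      apply: pair_cont => q; apply: continuous_comp.
      + exact: fst_cont.
      + exact: val_cont.
      + exact: snd_cont.
      + exact: phi1_cont.
    apply: (@continuous_comp _ _ _ D (fun z : FPX => (set_val z).1)); first exact: D_cont.
    apply: continuous_comp; [exact: val_cont|exact: fst_cont].
  apply: (@subspace_eq_continuous _ _ _ F1); last exact: continuous_subspaceT.
  move=> [u t] /set_mem h; rewrite /F1 /qA /gam /from_subspace /=; case: ifP => [//|/negbT /negP hn]; by case: hn.
- pose F2 (p : set_type A * I) := (set_val (D (set_val p.1, phi2 p.2))).2.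
  have cF2 : continuous F2.
    move=> p; apply: (@continuous_comp _ _ _ (fun p : set_type A * I => (set_val p.1, phi2 p.2))
      (fun q => (set_val (D q)).2)).
      apply: pair_cont => q; apply: continuous_comp.
      + exact: fst_cont.
      + exact: val_cont.
      + exact: snd_cont.
      + exact: phi2_cont.
    apply: (@continuous_comp _ _ _ D (fun z : FPX => (set_val z).2)); first exact: D_cont.
    apply: continuous_comp; [exact: val_cont|exact: snd_cont].
  apply: (@subspace_eq_continuous _ _ _ F2); last exact: continuous_subspaceT.
  move=> [u t] /set_mem /= h; rewrite /F2 /qA /gam /from_subspace /=; case: ifP => [h'|//].
  have ht : set_val t = 2^-1 by apply/eqP; rewrite eq_le h h'.
  have -> : phi1 t = phi2 t by apply: II_eq; rewrite phi1_half // phi2_half.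
  apply/esym; apply: Dend; last exact: phi2_half.
  exact: AN (set_valP u).
Qed.

Lemma gam_cont (u : set_type A) : continuous (gam (set_val u)).
Proof.
move=> t; apply: (@continuous_comp _ _ _ (fun t => (u, t)) qA); last exact: qA_cont.
by apply: (@pair_cont _ _ _ (fun=> u) (fun t => t)); [exact: cst_continuous|move=> ?].
Qed.

Lemma sA_mem (u : set_type A) :
  (pF (set_val u), (gam (set_val u) : {compact-open, I -> X})) \in PB_set pX.
Proof. by apply/mem_set; split; [exact: gam_cont|move=> t; exact: gam_fib]. Qed.

Definition sA (u : set_type A) : PB pX := SigSub (sA_mem u).

Lemma sA_cont : continuous sA.
Proof.
apply: cont_sub.
have -> : set_val \o sA = fun u => (pF (set_val u), (curry qA u : {compact-open, I -> X})) by [].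
apply: pair_cont.
  move=> u; apply: continuous_comp; [exact: val_cont|exact: pF_cont].
exact: (continuous_curry_fun qA_cont).
Qed.

Lemma sA_fib (u : set_type A) : pPB (sA u) = pF (set_val u).
Proof. by []. Qed.

Lemma sA_Pi (u : set_type A) : PiX (sA u) = set_val u.
Proof.
apply: sv_inj; rewrite -[LHS]/(gam (set_val u) zeroII, gam (set_val u) oneII) /gam.
have -> : set_val (@zeroII R) <= 2^-1 by rewrite /= invr_ge0 ler0n.
have -> : set_val (@oneII R) <= 2^-1 = false.
  by apply/negbTE; rewrite -ltNge /= invf_lt1 // ltr1n.
have e1 : set_val (phi1 (@zeroII R)) = 0 by exact: phi1_0.
have e2 : set_val (phi2 (@oneII R)) = 0 by exact: phi2_1.
rewrite (D0 _ e1) (D0 _ e2).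
by rewrite -surjective_pairing.
Qed.

Lemma sA_pt (u : set_type A) b : set_val u = sFP pX sX b ->
  sA u = sPB hs (pF (set_val u)).
Proof.
move=> ub; have pb : pF (set_val u) = b by rewrite ub; exact: hs.
apply: sv_inj.
rewrite -[LHS]/(pF (set_val u), (gam (set_val u) : {compact-open, I -> X})).
rewrite -[RHS]/(pF (set_val u), ((fun=> sX (pF (set_val u))) : {compact-open, I -> X})).
rewrite pb; congr pair.
apply: funext => t; rewrite /gam ub /sFP !Ddiag; by case: ifP.
Qed.

End Path.

Definition goodBB (W : set FPX) : Prop :=
  range (sFP pX sX) `<=` W /\ exists s : set_type W -> PB pX,
    [/\ continuous s, fibrewise (pF \o set_val) (@pPB R B X pX) s,
      (forall u, range (sFP pX sX) (set_val u) -> s u = sPB hs (pF (set_val u))) &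
      fphtpy (R:=R) (pF \o set_val) (fun u => range (sFP pX sX) (set_val u)) pF (sFP pX sX)
        (@PiX R B X pX \o s) set_val].

Lemma pF_sFP b : pF (sFP pX sX b) = b.
Proof. exact: hs. Qed.

Lemma base_N : range (sFP pX sX) `<=` N.
Proof. move=> _ [b _ <-]; rewrite /N /= /sFP gdiag; exact: ltr01. Qed.

Lemma base_V : range (sFP pX sX) `<=` V.
Proof. move=> _ [b _ <-]; rewrite /V /= /sFP gdiag. by rewrite invf_lt1 ?ltr1n ?ltr0n. Qed.

Lemma good_N : goodBB N.
Proof.
split; first exact: base_N.
exists (sA (A:=N) (fun z h => h)); split.
- exact: sA_cont.
- by [].
- by move=> u [b _ ub]; exact: (@sA_pt N (fun z h => h) u b (esym ub)).
exists (fun p => set_val p.1); split.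
- move=> p; apply: continuous_comp; [exact: fst_cont|exact: val_cont].
- by move=> x t _ /=; rewrite sA_Pi.
- by [].
- by [].
- by move=> x t [b _ xb]; rewrite /= -xb pF_sFP.
Qed.

Lemma open_N : open N.
Proof. exact: ((continuousP g).1 g_cont _ (@open_gt R 0)). Qed.
Lemma open_V : open V.
Proof. exact: ((continuousP g).1 g_cont _ (@open_gt R 2^-1)). Qed.
Lemma closed_C : closed C.
Proof. exact: ((continuous_closedP g).1 g_cont _ (@closed_ge R 2^-1)). Qed.
Lemma VN z : V z -> N z.
Proof. by rewrite /V /N /=; apply: lt_trans; rewrite invr_gt0 ltr0n. Qed.
Lemma VC z : V z -> C z.
Proof. by rewrite /V /C /=; exact: ltW. Qed.

Section GlueGood.
Context (U : set FPX) (oU : open U) (sU : set_type U -> PB pX) (csU : continuous sU)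
  (fU : fibrewise (pF \o set_val) (@pPB R B X pX) sU)
  (hU : fhtpy (R:=R) (pF \o set_val) pF (@PiX R B X pX \o sU) set_val).

Let W := (U `\` C) `|` V.
Let Q := U `\` C.
Let cov : forall x, W x -> ~ V x -> Q x.
Proof. by move=> x [//|]. Qed.
Let disj : forall x, V x -> Q x -> False.
Proof. by move=> x /VC xC [_]. Qed.
Let oQ : open Q.
Proof. by apply: openI => //; rewrite openC; exact: closed_C. Qed.

Definition iota (q : set_type Q) : set_type U :=
  @SigSub _ _ _ (set_val q) (mem_set (proj1 (set_valP q))).
Lemma iota_cont : continuous iota.
Proof. by apply: cont_sub; exact: val_cont. Qed.

Definition sPg (p : set_type V * I) : PB pX := sA (A:=V) VN p.1.
Definition sQg (p : set_type Q * I) : PB pX := sU (iota p.1).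
Definition sW (u : set_type W) : PB pX := glue cov sPg sQg (u, zeroII).

Lemma sW_cont : continuous sW.
Proof.
have cg : continuous (glue cov sPg sQg).
  apply: (glue_cont disj open_V oQ).
  - move=> p; apply: (@continuous_comp _ _ _ fst (sA (A:=V) VN)); [exact: fst_cont|exact: sA_cont].
  - move=> p; apply: (@continuous_comp _ _ _ (fun p : set_type Q * I => iota p.1) sU); last exact: csU.
    apply: continuous_comp; [exact: fst_cont|exact: iota_cont].
move=> u; apply: (@continuous_comp _ _ _ (fun u => (u, zeroII))); last exact: cg.
by apply: (@pair_cont _ _ _ (fun u => u) (fun=> zeroII)); [move=> ?|exact: cst_continuous].
Qed.

Lemma good_glue : goodBB W.
Proof.
split; first by move=> z /base_V; right.
have [G [cG G0 G1 Gf]] := hU.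
pose hPh (p : set_type V * I) : FPX := set_val p.1.
pose hQh (p : set_type Q * I) : FPX := G (iota p.1, p.2).
exists sW; split.
- exact: sW_cont.
- move=> u; rewrite /sW; case: (pselect (V (set_val u))) => [p|np].
    by rewrite (glueP _ _ _ _ p).
  rewrite (glueQ _ disj _ _ _ (cov (set_valP u) np)) /sQg /=; exact: fU.
- move=> u [b _ ub]; rewrite /sW.
  have p : V (set_val u) by rewrite -ub; apply: base_V; exists b.
  rewrite (glueP _ _ _ _ p) /sPg /=.
  by apply: (@sA_pt V VN _ b); exact: (esym ub).
exists (glue cov hPh hQh); split.
- apply: (glue_cont disj open_V oQ).
  + move=> p; apply: continuous_comp; [exact: fst_cont|exact: val_cont].
  + move=> p; apply: (@continuous_comp _ _ _ (fun p : set_type Q * I => (iota p.1, p.2)) G); last exact: cG.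
    apply: pair_cont => q; last exact: snd_cont.
    apply: continuous_comp; [exact: fst_cont|exact: iota_cont].
- move=> u t t0; rewrite /sW /=; case: (pselect (V (set_val u))) => [p|np].
    by rewrite !(glueP _ _ _ _ p) /hPh /sPg sA_Pi.
  rewrite !(glueQ _ disj _ _ _ (cov (set_valP u) np)) /hQh /sQg /=.
  by rewrite G0.
- move=> u t t1; case: (pselect (V (set_val u))) => [p|np].
    by rewrite !(glueP _ _ _ _ p).
  by rewrite !(glueQ _ disj _ _ _ (cov (set_valP u) np)) /hQh G1.
- move=> u t; case: (pselect (V (set_val u))) => [p|np].
    by rewrite !(glueP _ _ _ _ p).
  by rewrite !(glueQ _ disj _ _ _ (cov (set_valP u) np)) /hQh Gf.
- move=> u t [b _ ub].
  have p : V (set_val u) by rewrite -ub; apply: base_V; exists b.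
  rewrite (glueP _ _ _ _ p) /hPh /=.
  have -> : pF (set_val u) = b by rewrite -ub pF_sFP.
  exact: (esym ub).
Qed.
End GlueGood.

Lemma B_to_BB k :
  secatB_le (R:=R) (@pPB R B X pX) pF (@PiX R B X pX) k ->
  secatBB_le (R:=R) (@pPB R B X pX) (sPB hs) pF (sFP pX sX) (@PiX R B X pX) k.+1.
Proof.
case=> U [oU cU sU].
pose U' (i : 'I_k.+2) : set FPX :=
  if (i < k.+1)%N then (U (inord i) `\` C) `|` V else N.
exists U'; split.
- move=> i; rewrite /U'; case: ifP => _; last exact: open_N.
  apply: openU; last exact: open_V.
  by apply: openI => //; rewrite openC; exact: closed_C.
- apply/seteqP; split => // z _.
  case: (pselect (C z)) => Cz.
    exists ord_max => //; rewrite /U' /= ltnn /N /=.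
    by apply: lt_le_trans Cz; rewrite invr_gt0 ltr0n.
  have : [set: FPX] z by [].
  rewrite -cU => -[j _ Ujz].
  exists (widen_ord (leqnSn k.+1) j) => //; rewrite /U' /= ltn_ord.
  by left; split => //; rewrite inord_val.
- move=> i; rewrite /U'; case: (i < k.+1)%N.
    have [s [cs fs hts]] := sU (inord i).
    exact: (good_glue (oU (inord i)) cs fs hts).
  exact: good_N.
Qed.

End Deform.
End Main.

Lemma BB_to_B {R : realType} {B X : topologicalType} (pX : X -> B) (sX : B -> X)
  (hs : forall b, pX (sX b) = b) k :
  secatBB_le (R:=R) (@pPB R B X pX) (sPB hs) (@pFP B X pX) (sFP pX sX) (@PiX R B X pX) k ->
  secatB_le (R:=R) (@pPB R B X pX) (@pFP B X pX) (@PiX R B X pX) k.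
Proof.
case=> U [oU cU sU]; exists U; split => // i.
have [_ [s [cs fs _ [H [? ? ? ? _]]]]] := sU i.
by exists s; split => //; exists H; split.
Qed.

Local Open Scope ereal_scope.

Theorem corollary3p5 (R : realType) (B X : topologicalType)
  (pX : X -> B) (sX : B -> X)
  (pX_cont : continuous pX) (sX_cont : continuous sX)
  (hs : forall b, pX (sX b) = b) :
  fLEC (R := R) pX -> normal_space (FP pX) ->
  TCB (R := R) pX <= TCBB (R := R) hs /\ TCBB (R := R) hs <= TCB (R := R) pX + 1.
Proof.
move=> [_ [cj [_ hep]]] _.
split.
  apply: le_ereal_inf_tmp => _ [k hk <-]; apply: ereal_inf_lbound; exists k => //.
  exact: BB_to_B hk.
have H0f : forall a (t : @II R), set_val t = 0%R -> @H0 R B X pX (a, t) = f0 (diagFP pX a).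
  move=> a t t0; apply: sv_inj; rewrite -[LHS]/(diagFP pX a, t) -[RHS]/(diagFP pX a, zeroII).
  by congr pair; exact: sv_inj.
have [Hd [Hc Hf He Hr]] := hep (@Y R B X pX) (@pY R B X pX) (@f0 R B X pX) (@H0 R B X pX)
  (@f0_cont R B X pX) (fun _ => erefl) (H0_cont cj) (fun _ _ => erefl)
  H0f.
case: (pselect (exists k, secatB_le (R:=R) (@pPB R B X pX) (@pFP B X pX) (@PiX R B X pX) k)) => [[k0 hk0]|nex].
  pose P := fun k => `[< secatB_le (R:=R) (@pPB R B X pX) (@pFP B X pX) (@PiX R B X pX) k >].
  have exP : exists k, P k by exists k0; exact/asboolP.
  case: (ex_minnP exP) => m /asboolP Pm minm.
  have h1 : TCBB (R:=R) hs <= (m.+1)%:R%:E.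
    apply: ereal_inf_lbound; exists m.+1 => //.
    exact: (B_to_BB pX_cont hs Hc Hf He Hr Pm).
  have h2 : (m%:R)%:E <= TCB (R:=R) pX.
    apply: le_ereal_inf_tmp => _ [n hn <-]; rewrite lee_fin ler_nat.
    by apply: minm; exact/asboolP.
  apply: (le_trans h1).
  have -> : ((m.+1)%:R)%:E = (m%:R)%:E + 1 :> \bar R by rewrite -EFinD natr1.
  exact: leeD2r.
have tinf : TCB (R:=R) pX = +oo.
  apply/ereal_inf_pinfty => x [k hk _]; exfalso; apply: nex; exists k; exact: hk.
have -> : TCB (R:=R) pX + 1 = +oo by rewrite tinf.
exact: leey.
Qed.
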